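(* Let $G$ be a topological group acting continuously on a topological space $X$, let $\Delta$ be the partition of $X$ into $G$-orbits, $Y=X/G$ with the quotient topology, and $p:X\to Y$ the projection. Suppose that (a) $X$ is a Hausdorff Baire space; (b) $G=\bigcup_{i=1}^\infty G_i$ is a union of countably many compact sets $G_i$; (c) the action has at least two distinct orbits; (d) each orbit is dense in $X$. Then $p$ has property (CONT) but does not have property (COMP).
   Context: A Baire space is a topological space that is not a countable union of nowhere dense subsets of itself. A $\Delta$-map is a continuous $h:X\to X$ mapping each element of $\Delta$ into some element of $\Delta$; $\mathrm{End}(X,\Delta)$ is the monoid of $\Delta$-maps, $\mathrm{End}(Y)=C(Y,Y)$, and $\psi(h)$ is the unique map with $p\circ h=\psi(h)\circ p$. Property (COMP): for every compact $L\subset Y$ there is a compact $K\subset X$ with $p(K)=L$. Property (CONT): $\psi:\mathrm{End}(X,\Delta)\to\mathrm{End}(Y)$ is continuous with respect to compact open topologies. *)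

(* Defs.v *)
From HB Require Import structures.
From mathcomp Require Import all_boot all_order all_algebra.
From mathcomp Require Import all_classical all_reals all_analysis.
Set Implicit Arguments.
Unset Strict Implicit.
Unset Printing Implicit Defensive.
Local Open Scope classical_set_scope.

Definition is_topological_group (G : topologicalType)
  (mul : G -> G -> G) (inv : G -> G) (one : G) : Prop :=
  [/\ (forall a b c, mul a (mul b c) = mul (mul a b) c),
      (forall a, mul one a = a /\ mul a one = a),
      (forall a, mul (inv a) a = one /\ mul a (inv a) = one),
      continuous (fun q : G * G => mul q.1 q.2)
    & continuous inv].

Definition is_continuous_action (G X : topologicalType)
  (mul : G -> G -> G) (one : G) (act : G -> X -> X) : Prop :=
  [/\ (forall x, act one x = x),
      (forall g h x, act (mul g h) x = act g (act h x))
    & continuous (fun q : G * X => act q.1 q.2)].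

(* The G-orbit of x; Delta is the partition of X into these orbits. *)
Definition G_orbit (G X : Type) (act : G -> X -> X) (x : X) : set X :=
  [set act g x | g in [set: G]].

(* (Y, p) is the orbit space X/G with the quotient topology:
   p is onto, its fibres are exactly the orbits, and V is open in Y
   iff p^-1(V) is open in X. *)
Definition is_orbit_quotient (G X Y : topologicalType)
  (act : G -> X -> X) (p : X -> Y) : Prop :=
  [/\ (forall y : Y, exists x, p x = y),
      (forall x x', p x = p x' <-> G_orbit act x x')
    & (forall V : set Y, open V <-> open (p @^-1` V))].

Definition nowhere_dense (T : topologicalType) (A : set T) : Prop :=
  interior (closure A) = set0.

Definition baire_space (T : topologicalType) : Prop :=
  ~ exists F : nat -> set T,
      (forall n, nowhere_dense (F n)) /\ \bigcup_n F n = [set: T].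

Definition Delta_map (G X : topologicalType) (act : G -> X -> X)
  (h : X -> X) : Prop :=
  continuous h /\ forall x, exists x', h @` G_orbit act x `<=` G_orbit act x'.

Definition End_Delta (G X : topologicalType) (act : G -> X -> X)
  : set {compact-open, X -> X} := [set h | Delta_map act h].

(* Property (CONT): the map psi : End(X,Delta) -> End(Y), characterized by
   p \o h = psi h \o p, is continuous for the compact-open topologies
   (End(X,Delta) with the subspace topology). *)
Definition prop_CONT (G X Y : topologicalType) (act : G -> X -> X)
  (p : X -> Y) : Prop :=
  forall psi : {compact-open, X -> X} -> {compact-open, Y -> Y},
    (forall h, Delta_map act h -> p \o h = psi h \o p) ->
    {within End_Delta act, continuous psi}.

Definition prop_COMP (X Y : topologicalType) (p : X -> Y) : Prop :=
  forall L : set Y, compact L -> exists K : set X, compact K /\ p @` K = L.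

(* Main.v *)
Require Import Defs.
From HB Require Import structures.
From mathcomp Require Import all_boot all_order all_algebra.
From mathcomp Require Import all_classical all_reals all_analysis.
Local Open Scope classical_set_scope.

Lemma indisc (G X Y : topologicalType) (act : G -> X -> X) (p : X -> Y)
  (Hp : is_orbit_quotient act p)
  (Hd : forall x : X, dense (G_orbit act x)) :
  forall O : set Y, open O -> forall y, O y -> forall y', O y'.
Proof.
case: Hp => Hsur Hfib Hop O oO y Oy y'.
have oU : open (p @^-1` O) by apply/Hop.
case: (Hsur y) => x px; case: (Hsur y') => x' px'.
have Ox : (p @^-1` O) x by rewrite /= px.
have := Hd x' (p @^-1` O) (ex_intro _ x Ox) oU.
case=> z [/= Oz [g _ gz]]; subst z.
rewrite -px'; have : p x' = p (act g x') by apply/Hfib; exists g.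
by move=> ->.
Qed.

Arguments indisc {G X Y act p}.

Lemma contP (G X Y : topologicalType) (act : G -> X -> X) (p : X -> Y)
  (Hp : is_orbit_quotient act p)
  (Hd : forall x : X, dense (G_orbit act x)) : prop_CONT act p.
Proof.
move=> psi _ h.
apply/compact_open_cvgP => K O cK oO hKO.
apply: filterS (filterT).
move=> g _ z [k Kk <-].
have hk : O (psi h k) by apply: hKO; exists k.
exact: (indisc Hp Hd O oO _ hk).
Qed.

Lemma pact (G X Y : topologicalType) (act : G -> X -> X) (p : X -> Y)
  (Hp : is_orbit_quotient act p) g x : p (act g x) = p x.
Proof. by case: Hp => _ Hfib _; symmetry; apply/Hfib; exists g. Qed.

Lemma indisc_compact (G X Y : topologicalType) (act : G -> X -> X) (p : X -> Y)
  (Hp : is_orbit_quotient act p)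
  (Hd : forall x : X, dense (G_orbit act x)) (L : set Y) (y : Y) :
  L y -> compact L.
Proof.
move=> Ly F PF FL; exists y; split => //.
rewrite /cluster /= => A B FA nB.
case: (filter_ex (filterI FL FA)) => z [_ Az]; exists z; split => //.
move: nB; rewrite nbhsE => -[U [oU Uy] UB]; apply: UB.
exact: (indisc Hp Hd U oU y Uy z).
Qed.

Arguments pact {G X Y act p}.
Arguments indisc_compact {G X Y act p}.

Theorem mainTheorem10
  (G : topologicalType) (mul : G -> G -> G) (inv : G -> G) (one : G)
  (HG : is_topological_group mul inv one)
  (X : topologicalType) (act : G -> X -> X)
  (Hact : is_continuous_action mul one act)
  (Y : topologicalType) (p : X -> Y) (Hp : is_orbit_quotient act p)
  (Ha : hausdorff_space X /\ baire_space X)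
  (Gi : nat -> set G)
  (Hb : (forall i, compact (Gi i)) /\ \bigcup_i Gi i = [set: G])
  (Hc : exists x x' : X, G_orbit act x <> G_orbit act x')
  (Hd : forall x : X, dense (G_orbit act x)) :
  prop_CONT act p /\ ~ prop_COMP p.
Proof.
split; first exact: contP Hp Hd.
move=> Hcomp.
case: Hc => x0 [x1 Hne].
have Hfib := Hp; case: Hfib => _ Hfib _.
have n01 : p x1 <> p x0.
  move=> e; apply: Hne; apply/seteqP; split => z /= Hz.
    have /Hfib : G_orbit act x0 z by [].
    by move=> e'; apply/Hfib; rewrite e.
  have /Hfib : G_orbit act x1 z by [].
  by move=> e'; apply/Hfib; rewrite -e.
pose L := ~` [set p x0].
have [K [cK pK]] := Hcomp L (indisc_compact Hp Hd L (p x1) n01).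
case: Hact => _ _ cact.
case: Ha => hX bX; case: Hb => cGi uGi.
apply: bX.
pose S n := if odd n then K else [set x0].
pose F n := (fun q : G * X => act q.1 q.2) @` (Gi n./2 `*` S n).
have cF n : compact (F n).
  apply: continuous_compact; first exact: continuous_subspaceT.
  apply: compact_setX => //; rewrite /S; case: (odd n) => //.
  exact: compact_set1.
have clF n : closed (F n) by apply: compact_closed.
exists F; split.
  move=> n; rewrite /nowhere_dense -(proj1 (closure_id _) (clF n)).
  apply/seteqP; split => // z Iz.
  have oI := open_interior (F n).
  have sI : (F n)° `<=` F n by apply: interior_subset.
  have hF : forall w, F n w -> if odd n then p w <> p x0 else p w = p x0.
    move=> w [[g' k] [_ Sk] /= <-]; rewrite (pact Hp).
    move: Sk; rewrite /S; case: (odd n) => [Kk|/= ->] //.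
    by have : L (p k) by rewrite -pK; exists k.
  move: hF; case: (odd n) => hF.
  - have [w [Iw [g _ gw]]] := Hd x0 _ (ex_intro _ z Iz) oI.
    by apply: (hF w (sI w Iw)); rewrite -gw (pact Hp).
  - have [w [Iw [g _ gw]]] := Hd x1 _ (ex_intro _ z Iz) oI.
    by apply: n01; rewrite -(pact Hp g x1) gw; apply: hF; apply: sI.
apply/seteqP; split => // z _.
have inG : forall g, exists i, Gi i g.
  move=> g; have : (\bigcup_i Gi i) g by rewrite uGi.
  by case=> i _ Gig; exists i.
case: (pselect (p z = p x0)) => e.
  have [g _ gz] : G_orbit act x0 z by apply/Hfib.
  have [i Gig] := inG g.
  exists i.*2 => //; rewrite /F /S odd_double doubleK.
  by exists (g, x0).
have : L (p z) by [].
rewrite -pK => -[k Kk ek].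
have [g _ gz] : G_orbit act k z by apply/Hfib.
have [i Gig] := inG g.
exists i.*2.+1 => //; rewrite /F /S /= odd_double.
rewrite ?uphalf_double.
by exists (g, k).
Qed.
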